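(* Let $g>0$, $\beta>0$, $\lambda\ge1$ an integer, and $0\le\mu_1\le\mu_2\le\cdots\le\mu_{2\lambda}\le1$. Then \[ -2g^2\coth(\tfrac{\beta}{2})+\frac{4g^2\cosh(\beta(1-\mu_{2\lambda}))}{\sinh\beta}+\xi_{2\lambda}(\boldsymbol{\mu}_{2\lambda},\beta)+\psi^-_{2\lambda}(\boldsymbol{\mu}_{2\lambda},\beta)\le 0, \] that is, $\Theta_{2\lambda}(g,\beta,\boldsymbol{\mu}_{2\lambda})\le 1$.
   Context: Fix $g>0$. For an integer $\lambda\ge1$, a vector $\boldsymbol{\mu}_\lambda=(\mu_1,\dots,\mu_\lambda)$ with $\mu_0:=0$, and $t>0$, define \[ \xi_\lambda(\boldsymbol{\mu}_\lambda,t)=-\frac{8g^2}{\sinh t}\sinh^2\!\big(\tfrac{t}{2}(1-\mu_\lambda)\big)(-1)^\lambda\sum_{\gamma=0}^{\lambda}(-1)^\gamma\cosh(t\mu_\gamma)-\frac{4g^2}{\sinh t}\sum_{\substack{0\le i<j\le\lambda-1\\ j-i\ \text{odd}}}\big(\cosh(t(1-\mu_{j+1}))-\cosh(t(1-\mu_j))\big)\big(\cosh(t\mu_i)-\cosh(t\mu_{i+1})\big), \] \[ \psi^-_\lambda(\boldsymbol{\mu}_\lambda,t)=\frac{4g^2}{\sinh t}\Big[\sum_{\gamma=0}^{\lambda}(-1)^\gamma\sinh\big(t(\tfrac12-\mu_\gamma)\big)\Big]^2, \] \[ \Theta_{2\lambda}(g,\beta,\boldsymbol{\mu}_{2\lambda})=\exp\Big(-2g^2\coth(\tfrac{\beta}{2})+\frac{4g^2\cosh(\beta(1-\mu_{2\lambda}))}{\sinh\beta}+\xi_{2\lambda}(\boldsymbol{\mu}_{2\lambda},\beta)+\psi^-_{2\lambda}(\boldsymbol{\mu}_{2\lambda},\beta)\Big).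 \] *)

(* Defs.v *)
From Stdlib Require Import Reals.
Open Scope R_scope.

Fixpoint fsum (n : nat) (f : nat -> R) : R :=
  match n with
  | O => 0
  | S k => fsum k f + f k
  end.

Definition coth (x : R) : R := cosh x / sinh x.

(* A vector mu_lambda = (mu_1,...,mu_lambda) is given as mu : nat -> R,
   read at indices 1..lambda; index 0 is forced to mu_0 := 0. *)
Definition mu0 (mu : nat -> R) (i : nat) : R :=
  match i with O => 0 | _ => mu i end.

Definition xi (g : R) (lam : nat) (mu : nat -> R) (t : R) : R :=
  let m := mu0 mu in
  - (8 * g ^ 2 / sinh t) * (sinh (t / 2 * (1 - m lam))) ^ 2 * (-1) ^ lam
    * fsum (S lam) (fun gam => (-1) ^ gam * cosh (t * m gam))
  - (4 * g ^ 2 / sinh t) *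
    fsum lam (fun j => fsum j (fun i =>
      if Nat.odd (j - i)
      then (cosh (t * (1 - m (S j))) - cosh (t * (1 - m j)))
           * (cosh (t * m i) - cosh (t * m (S i)))
      else 0)).

Definition psi_minus (g : R) (lam : nat) (mu : nat -> R) (t : R) : R :=
  let m := mu0 mu in
  4 * g ^ 2 / sinh t *
  (fsum (S lam) (fun gam => (-1) ^ gam * sinh (t * (1 / 2 - m gam)))) ^ 2.

Definition Theta_exponent (g beta : R) (lam : nat) (mu : nat -> R) : R :=
  - 2 * g ^ 2 * coth (beta / 2)
  + 4 * g ^ 2 * cosh (beta * (1 - mu0 mu (2 * lam))) / sinh beta
  + xi g (2 * lam) mu beta + psi_minus g (2 * lam) mu beta.

Definition Theta (g beta : R) (lam : nat) (mu : nat -> R) : R :=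
  exp (Theta_exponent g beta lam mu).

(* Main.v *)
Require Import Defs.
From Stdlib Require Import Reals Lra Lia FunctionalExtensionality.
Open Scope R_scope.

Lemma fsum_ext n f g : (forall i, (i < n)%nat -> f i = g i) -> fsum n f = fsum n g.
Proof. induction n; simpl; intros H; [reflexivity|]. rewrite IHn; [rewrite H|]; auto. Qed.

Lemma fsum_scal n a f : fsum n (fun i => a * f i) = a * fsum n f.
Proof. induction n; simpl; [ring|]. rewrite IHn; ring. Qed.

Lemma fsum_lin n a b f g : fsum n (fun i => a * f i + b * g i) = a * fsum n f + b * fsum n g.
Proof. induction n; simpl; [ring|]. rewrite IHn; ring. Qed.

Lemma fsum_nonneg n f : (forall i, (i < n)%nat -> 0 <= f i) -> 0 <= fsum n f.
Proof. induction n; simpl; intros H; [lra|]. assert (0 <= fsum n f) by auto.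
  assert (0 <= f n) by auto. lra. Qed.

Definition alt (f : nat -> R) (n : nat) := fsum (S n) (fun i => (-1)^i * f i).
Definition Dodd (f : nat -> R) (j : nat) :=
  fsum j (fun i => if Nat.odd (j - i) then f i - f (S i) else 0).

Lemma alt_lin n a b f g : alt (fun i => a * f i + b * g i) n = a * alt f n + b * alt g n.
Proof. unfold alt. rewrite <- fsum_lin. apply fsum_ext; intros; ring. Qed.

Lemma alt_SS f k : alt f (S (S (2*k))) = alt f (2*k) - f (S (2*k)) + f (S (S (2*k))).
Proof. unfold alt. cbn [fsum]. rewrite <- !tech_pow_Rmult, pow_1_even. lra. Qed.

Lemma Dodd_SS f j : Dodd f (S (S j)) = Dodd f j + (f (S j) - f (S (S j))).
Proof. unfold Dodd. cbn [fsum].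
  replace (S (S j) - j)%nat with 2%nat by lia.
  replace (S (S j) - S j)%nat with 1%nat by lia. change (Nat.odd 2) with false; change (Nat.odd 1) with true.
  rewrite (fsum_ext j _ (fun i => if Nat.odd (j - i) then f i - f (S i) else 0)); [ring|].
  intros i Hi. replace (S (S j) - i)%nat with (S (S (j - i))) by lia. reflexivity. Qed.

Lemma Dodd_even f k : Dodd f (2*k) = f 0%nat - alt f (2*k).
Proof. induction k.
  - unfold Dodd, alt; simpl. ring.
  - replace (2 * S k)%nat with (S (S (2*k))) by lia. rewrite Dodd_SS, alt_SS, IHk. ring. Qed.

Lemma Dodd_odd f k : Dodd f (S (2*k)) = alt f (2*k) - f (S (2*k)).
Proof. induction k.
  - unfold Dodd, alt; simpl. ring.
  - replace (2 * S k)%nat with (S (S (2*k))) by lia. rewrite Dodd_SS, alt_SS, IHk. ring. Qed.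

Definition Cc (e : nat -> R) i := (e i + / e i) / 2.
Definition CC (T : R) (e : nat -> R) i := (T^2 * / e i + e i / T^2) / 2.
Definition SS (T : R) (e : nat -> R) i := (T * / e i - e i / T) / 2.
Definition ie (e : nat -> R) i := / e i.

Definition RX (T : R) (e : nat -> R) (n : nat) : R :=
  let sh := (T^2 - / T^2) / 2 in
  - 2 * ((T + / T) / (T - / T)) + 4 * CC T e n / sh
  - 8 / sh * ((CC T e n - 1) / 2) * (-1)^n * alt (Cc e) n
  - 4 / sh * fsum n (fun j => (CC T e (S j) - CC T e j) * Dodd (Cc e) j)
  + 4 / sh * (alt (SS T e) n) ^ 2.

Definition Qin T e n := fsum n (fun b => T * (/ e b - / e (S b)) * (- Dodd e b)
   + / T * (e (S b) - e b) * Dodd (ie e) b).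
Definition Ql T e n := T * (/ e n - / T^2) * (- Dodd e n) + / T * (T^2 - e n) * Dodd (ie e) n.

Lemma key T e k : 1 < T -> (forall i, 0 < e i) -> e 0%nat = 1 ->
  RX T e (2*k) * (T - / T) + 2 * (Qin T e (2*k) + Ql T e (2*k)) = 0.
Proof.
  intros HT He He0.
  assert (T <> 0) by lra.
  assert (HT2 : T^2 - / T^2 <> 0).
  { assert (1 < T^2) by nra. assert (/ T^2 < 1).
    { rewrite <- Rinv_1. apply Rinv_lt_contravar; nra. } lra. }
  assert (HT1 : T - / T <> 0).
  { assert (/ T < 1). { rewrite <- Rinv_1. apply Rinv_lt_contravar; nra. } lra. }
  assert (Hn : forall i, e i <> 0) by (intros i; specialize (He i); lra).
  assert (H2 : T*T - 1 <> 0) by nra.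
  assert (H4 : T*T*(T*T) - 1 <> 0) by nra.
  induction k.
  - unfold RX, Qin, Ql, Dodd, alt, Cc, CC, SS; simpl. rewrite He0. field.
    repeat split; auto.
  - replace (2 * S k)%nat with (S (S (2*k))) by lia.
    set (n := (2*k)%nat) in *.
    set (A := fsum n (fun j => (CC T e (S j) - CC T e j) * Dodd (Cc e) j)).
    set (B := Qin T e n).
    assert (EA : fsum (S (S n)) (fun j => (CC T e (S j) - CC T e j) * Dodd (Cc e) j)
       = A + (CC T e (S n) - CC T e n) * Dodd (Cc e) n
           + (CC T e (S (S n)) - CC T e (S n)) * Dodd (Cc e) (S n)) by reflexivity.
    assert (EB : Qin T e (S (S n)) = B
       + (T * (/ e n - / e (S n)) * (- Dodd e n) + / T * (e (S n) - e n) * Dodd (ie e) n)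
       + (T * (/ e (S n) - / e (S (S n))) * (- Dodd e (S n)) + / T * (e (S (S n)) - e (S n)) * Dodd (ie e) (S n)))
       by reflexivity.
    revert IHk. unfold RX, Ql. rewrite EA, EB. fold A. fold B.
    rewrite !Dodd_SS. unfold n. rewrite !Dodd_even, !Dodd_odd, !alt_SS, !pow_1_even.
    replace (S (S (2 * k))) with (2 * S k)%nat by lia. rewrite pow_1_even.
    replace (2 * S k)%nat with (S (S (2*k))) by lia.
    assert (AC : alt (Cc e) (2*k) = /2 * alt e (2*k) + /2 * alt (ie e) (2*k)).
    { rewrite <- alt_lin. unfold alt. apply fsum_ext; intros; unfold Cc, ie; field; auto. }
    assert (AS : alt (SS T e) (2*k) = (T/2) * alt (ie e) (2*k) + (-/(2*T)) * alt e (2*k)).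
    { rewrite <- alt_lin. unfold alt. apply fsum_ext; intros; unfold SS, ie; field; auto. }
    rewrite AC, AS. unfold Cc, CC, SS, ie. rewrite He0.
    intros IH.
    set (a := alt e (2*k)) in *. set (b := alt (fun i => / e i) (2*k)) in *. clearbody a b.
    assert (Hx := Hn (2*k)%nat); assert (Hy := Hn (S (2*k))); assert (Hz := Hn (S (S (2*k)))).
    generalize dependent (e (2*k)%nat); generalize dependent (e (S (2*k)));
    generalize dependent (e (S (S (2*k)))). intros z Hz y Hy x IH Hx.
    clearbody A B n.         match goal with IH : ?L = 0 |- ?G = 0 => assert (G - L = 0) end; [field | lra | ..].
    repeat split; auto. all: nra.
Qed.

Lemma fsum_nonpos n f : (forall i, (i < n)%nat -> f i <= 0) -> fsum n f <= 0.
Proof. induction n; simpl; intros H; [lra|]. assert (fsum n f <= 0) by auto.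
  assert (f n <= 0) by auto. lra. Qed.

Lemma Dodd_nonpos f j : (forall i, (i < j)%nat -> f i <= f (S i)) -> Dodd f j <= 0.
Proof. intros H. unfold Dodd. apply fsum_nonpos. intros i Hi.
  destruct (Nat.odd (j - i)); [specialize (H i Hi); lra | lra]. Qed.

Lemma Dodd_nonneg f j : (forall i, (i < j)%nat -> f (S i) <= f i) -> 0 <= Dodd f j.
Proof. intros H. unfold Dodd. apply fsum_nonneg. intros i Hi.
  destruct (Nat.odd (j - i)); [specialize (H i Hi); lra | lra]. Qed.

Lemma Q_nonneg T e n : 1 < T -> (forall i, 0 < e i) ->
  (forall i, (i < n)%nat -> e i <= e (S i)) -> e n <= T^2 ->
  0 <= Qin T e n + Ql T e n.
Proof.
  intros HT He Hm Hn.
  assert (Hinv : forall i, (i < n)%nat -> / e (S i) <= / e i).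
  { intros i Hi. apply Rinv_le_contravar; auto. }
  assert (HiT : / T^2 <= / e n) by (apply Rinv_le_contravar; auto).
  assert (0 < / T) by (apply Rinv_0_lt_compat; lra).
  apply Rplus_le_le_0_compat.
  - unfold Qin. apply fsum_nonneg. intros b Hb.
    assert (D1 : Dodd e b <= 0) by (apply Dodd_nonpos; intros; apply Hm; lia).
    assert (D2 : 0 <= Dodd (ie e) b) by (apply Dodd_nonneg; intros; unfold ie; apply Hinv; lia).
    assert (I1 := Hinv b Hb). assert (I2 := Hm b Hb).
    apply Rplus_le_le_0_compat; apply Rmult_le_pos; try apply Rmult_le_pos; lra.
  - assert (D1 : Dodd e n <= 0) by (apply Dodd_nonpos; auto).
    assert (D2 : 0 <= Dodd (ie e) n) by (apply Dodd_nonneg; intros; unfold ie; auto).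
    apply Rplus_le_le_0_compat; apply Rmult_le_pos; try apply Rmult_le_pos; lra.
Qed.

Lemma cosh_e t x : cosh (t * x) = Cc (fun _ => exp (t * x)) 0%nat.
Proof. unfold cosh, Cc. rewrite exp_Ropp. reflexivity. Qed.

Lemma expT2 t : exp t = exp (t/2) ^ 2.
Proof. rewrite <- (Rmult_1_r (exp (t/2))), <- tech_pow_Rmult, pow_1, Rmult_1_r, <- exp_plus.
  f_equal; field. Qed.

Lemma cosh_ee t x : cosh (t * x) = (exp (t * x) + / exp (t * x)) / 2.
Proof. unfold cosh. rewrite exp_Ropp. reflexivity. Qed.

Lemma CC_e t x : cosh (t * (1 - x)) =
  (exp (t/2) ^ 2 * / exp (t * x) + exp (t * x) / exp (t/2) ^ 2) / 2.
Proof. unfold cosh. rewrite <- expT2.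
  replace (t * (1 - x)) with (t + - (t * x)) by ring.
  replace (- (t + - (t * x))) with (t * x + - t) by ring.
  rewrite !exp_plus, !exp_Ropp. unfold Rdiv. ring. Qed.

Lemma SS_e t x : sinh (t * (1/2 - x)) =
  (exp (t/2) * / exp (t * x) - exp (t * x) / exp (t/2)) / 2.
Proof. unfold sinh.
  replace (t * (1/2 - x)) with (t/2 + - (t * x)) by field.
  replace (- (t/2 + - (t * x))) with (t * x + - (t/2)) by ring.
  rewrite !exp_plus, !exp_Ropp. unfold Rdiv. ring. Qed.

Lemma sq_e t x : sinh (t/2 * (1 - x)) ^ 2 =
  ((exp (t/2) ^ 2 * / exp (t * x) + exp (t * x) / exp (t/2) ^ 2) / 2 - 1) / 2.
Proof. rewrite <- CC_e. unfold sinh, cosh.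
  set (y := t/2 * (1 - x)).
  replace (t * (1 - x)) with (y + y) by (unfold y; field).
  replace (- (y + y)) with (- y + - y) by ring.
  rewrite !exp_plus, !exp_Ropp.
  assert (exp y <> 0) by (apply Rgt_not_eq, exp_pos). field; auto. Qed.

Lemma sinh_t t : sinh t = (exp (t/2) ^ 2 - / exp (t/2) ^ 2) / 2.
Proof. unfold sinh. rewrite exp_Ropp, <- expT2. reflexivity. Qed.

Lemma expgt1 t : 0 < t -> 1 < exp t.
Proof. intros; rewrite <- exp_0; apply exp_increasing; lra. Qed.

Lemma coth_t t : 0 < t -> coth (t/2) = (exp (t/2) + / exp (t/2)) / (exp (t/2) - / exp (t/2)).
Proof. intros Ht. assert (H1 := expgt1 (t/2) ltac:(lra)).
  assert (/ exp (t/2) < 1) by (rewrite <- Rinv_1; apply Rinv_lt_contravar; lra).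
  unfold coth, cosh, sinh. rewrite exp_Ropp. field. split; nra. Qed.

Lemma inner j K f g : (forall i, g i = if Nat.odd (j - i) then K * (f i - f (S i)) else 0) ->
  fsum j g = K * Dodd f j.
Proof. intros H. unfold Dodd. rewrite <- fsum_scal. apply fsum_ext. intros i _.
  rewrite H. destruct (Nat.odd (j - i)); ring. Qed.

Lemma Dodd_ext f g j : (forall i, f i = g i) -> Dodd f j = Dodd g j.
Proof. intros H. unfold Dodd. apply fsum_ext. intros. rewrite !H. reflexivity. Qed.

Lemma conv g t lam mu : 0 < t ->
  Theta_exponent g t lam mu = g^2 * RX (exp (t/2)) (fun i => exp (t * mu0 mu i)) (2*lam).
Proof.
  intros Ht.
  unfold Theta_exponent, xi, psi_minus. cbv zeta.
  set (n := (2*lam)%nat).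
  set (E := fun i => exp (t * mu0 mu i)). set (T := exp (t/2)).
  assert (F1 : fsum (S n) (fun gam => (-1)^gam * cosh (t * mu0 mu gam)) = alt (Cc E) n).
  { unfold alt. apply fsum_ext; intros. rewrite cosh_ee. reflexivity. }
  assert (F2 : fsum n (fun j => fsum j (fun i => if Nat.odd (j - i)
      then (cosh (t * (1 - mu0 mu (S j))) - cosh (t * (1 - mu0 mu j)))
           * (cosh (t * mu0 mu i) - cosh (t * mu0 mu (S i))) else 0))
      = fsum n (fun j => (CC T E (S j) - CC T E j) * Dodd (Cc E) j)).
  { apply fsum_ext; intros j _.
    rewrite (inner j (cosh (t * (1 - mu0 mu (S j))) - cosh (t * (1 - mu0 mu j))) (fun i => cosh (t * mu0 mu i))); [|intros; reflexivity].
    rewrite !CC_e. unfold CC. f_equal. apply Dodd_ext. intros; apply cosh_ee. }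
  assert (F3 : fsum (S n) (fun gam => (-1)^gam * sinh (t * (1/2 - mu0 mu gam))) = alt (SS T E) n).
  { unfold alt. apply fsum_ext; intros. rewrite SS_e. reflexivity. }
  rewrite F1, F2, F3, sq_e, CC_e, sinh_t, coth_t by exact Ht.
  unfold RX. fold T.
  change ((T^2 * / exp (t * mu0 mu n) + exp (t * mu0 mu n) / T^2) / 2) with (CC T E n).
  assert (H1 := expgt1 (t/2) ltac:(lra)). fold T in H1.
  assert (HE := exp_pos (t * mu0 mu n)).
  field. repeat split; try nra. all: assert (1 < T*T) by nra; apply Rgt_not_eq; simpl; nra.
Qed.


Lemma exp_le a b : a <= b -> exp a <= exp b.
Proof. intros [H|H]; [left; apply exp_increasing; auto | right; subst; auto]. Qed.

Theorem mainTheorem2 (g beta : R) (lam : nat) (mu : nat -> R) :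
  0 < g -> 0 < beta -> (1 <= lam)%nat ->
  0 <= mu 1%nat ->
  (forall i : nat, (1 <= i)%nat -> (i < 2 * lam)%nat -> mu i <= mu (S i)) ->
  mu (2 * lam)%nat <= 1 ->
  Theta_exponent g beta lam mu <= 0 /\ Theta g beta lam mu <= 1.
Proof.
  intros Hg Hb Hl H1 Hmono Htop.
  set (T := exp (beta/2)). set (E := fun i => exp (beta * mu0 mu i)).
  assert (HT : 1 < T) by (apply expgt1; lra).
  assert (HE : forall i, 0 < E i) by (intros; apply exp_pos).
  assert (HE0 : E 0%nat = 1) by (unfold E; simpl; rewrite Rmult_0_r; apply exp_0).
  assert (Hm : forall i, (i < 2*lam)%nat -> E i <= E (S i)).
  { intros i Hi. unfold E. apply exp_le. apply Rmult_le_compat_l; [lra|].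
    destruct i as [|i]; simpl; [exact H1|]. apply Hmono; lia. }
  assert (Ht : E (2*lam)%nat <= T^2).
  { unfold E, T. rewrite <- expT2. apply exp_le.
    assert (Em : mu0 mu (2*lam)%nat = mu (2*lam)%nat).
    { destruct (2*lam)%nat as [|k] eqn:Ek; [lia|]. reflexivity. }
    rewrite Em. nra. }
  assert (K := key T E lam HT HE HE0).
  assert (Q := Q_nonneg T E (2*lam) HT HE Hm Ht).
  assert (HiT : / T < 1) by (rewrite <- Rinv_1; apply Rinv_lt_contravar; lra).
  assert (HR : RX T E (2*lam) <= 0).
  { destruct (Rle_lt_dec (RX T E (2*lam)) 0) as [h|h]; auto.
    assert (0 < RX T E (2*lam) * (T - / T)) by (apply Rmult_lt_0_compat; lra). lra. }
  assert (HX : Theta_exponent g beta lam mu <= 0).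
  { rewrite conv by exact Hb. fold T. fold E.
    assert (0 <= g^2) by nra. nra. }
  split; auto. unfold Theta. rewrite <- exp_0. apply exp_le. exact HX.
Qed.
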